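(* Let $q$ be a prime power and let $\mathcal{F}\subseteq 2^{[n]}$ satisfy $|A\setminus B|\not\equiv 0\pmod q$ for all distinct $A,B\in\mathcal{F}$. Then $$|\mathcal{F}|\le\sum_{i=0}^{q-1}\binom{n-1}{i}.$$
   Context: $[n]=\{1,\ldots,n\}$ and $2^{[n]}$ is the family of all subsets of $[n]$. *)

(* Defs.v *)
From mathcomp Require Import all_boot.
Set Implicit Arguments. Unset Strict Implicit. Unset Printing Implicit Defensive.

Definition prime_power (q : nat) : Prop :=
  exists p k : nat, prime p /\ 0 < k /\ q = p ^ k.

(* Main.v *)
Require Import Defs.
From mathcomp Require Import all_boot all_algebra.
From mathcomp Require Import ring.
Import GRing.Theory.
Local Open Scope ring_scope.

Lemma alt_binom (R : comNzRingType) t m :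
  \sum_(k < m.+1) (-1)^+k * ('C(t.+1,k))%:R = (-1)^+m * ('C(t,m))%:R :> R.
Proof.
elim: m => [|m IH]; first by rewrite big_ord1 !bin0 !expr0.
rewrite big_ord_recr /= IH binS natrD exprS; ring.
Qed.

Lemma key (p e t : nat) : prime p -> (0 < e)%N -> ~~ (p ^ e %| t)%N ->
  \sum_(k < p ^ e) (-1)^+k * ('C(t,k))%:R = 0 :> 'F_p.
Proof.
move=> pp e0 ndv.
case: t ndv => [|t] ndv; first by rewrite dvdn0 in ndv.
have q0 : (0 < p ^ e)%N by rewrite expn_gt0 prime_gt0.
rewrite -(prednK q0) alt_binom.
suff /eqP -> : ('C(t, (p ^ e).-1))%:R == 0 :> 'F_p by rewrite mulr0.
rewrite -(dvdn_pcharf (pchar_Fp pp)).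
apply: contraR ndv => ndC.
have cop : coprime (p ^ e) 'C(t, (p ^ e).-1).
  by rewrite coprime_pexpl // prime_coprime.
rewrite -(Gauss_dvdl _ cop).
have := mul_bin_diag t.+1 (p ^ e).-1.
rewrite (prednK q0) /= => ->.
exact: dvdn_mulr.
Qed.

Lemma sum_by_card (R : nzSemiRingType) (T : finType) (W : {set T}) q (g : nat -> R) :
  \sum_(S : {set T} | (S \subset W) && (#|S| < q)%N) g #|S|
  = \sum_(k < q) ('C(#|W|, k))%:R * g k.
Proof.
transitivity (\sum_(S : {set T} | (S \subset W) && (#|S| < q)%N)
                \sum_(k < q | #|S| == k) g k).
  apply: eq_bigr => S /andP [_ lt].
  by rewrite (big_pred1 (Ordinal lt)) // => k; rewrite eq_sym.
rewrite (exchange_big_dep predT) //=.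
apply: eq_bigr => k _.
rewrite -cards_draws mulr_natl -sumr_const.
apply: eq_bigl => S; rewrite inE.
case: (#|S| =P k) => [->|]; last by rewrite !andbF.
by rewrite ltn_ord !andbT.
Qed.

Local Close Scope ring_scope.

Theorem mainTheorem2 (q n : nat) (F : {set {set 'I_n}}) :
  prime_power q ->
  (forall A B, A \in F -> B \in F -> A != B -> #|A :\: B| %% q != 0) ->
  #|F| <= \sum_(0 <= i < q) 'C(n.-1, i).
Proof.
Local Open Scope ring_scope.
move=> [p [e [pp [e0 ->]]]] H.
have q0 : (0 < p ^ e)%N by rewrite expn_gt0 prime_gt0.
case: n F H => [|m] F H.
  rewrite big_ltn //= bin0.
  apply: leq_trans (leq_addr _ _).
  rewrite -(cards1 (set0 : {set 'I_0})); apply: subset_leq_card.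
  apply/subsetP => S _; rewrite inE; by apply/eqP/setP => -[].
set q0n := (p ^ e)%N.
pose W0 := [set~ (ord_max : 'I_m.+1)].
pose SS := [set S : {set 'I_m.+1} | (S \subset W0) && (#|S| < q0n)%N].
have cardSS : #|SS| = \sum_(0 <= i < q0n) 'C(m.+1.-1, i).
  rewrite big_mkord /= -sum1_card.
  transitivity (\sum_(S : {set 'I_m.+1} | (S \subset W0) && (#|S| < q0n)%N) 1%N).
    by apply: eq_bigl => S; rewrite inE.
  have := @sum_by_card nat _ W0 q0n (fun _ => 1%N).
  rewrite /= cardsC1 card_ord /= => h; apply: etrans; first exact: h.
  by apply: eq_bigr => k _; rewrite natn mulr1.
pose Aof (i : 'I_#|F|) : {set 'I_m.+1} := enum_val i.
pose Sof (j : 'I_#|SS|) : {set 'I_m.+1} := enum_val j.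
pose U : 'M['F_p]_(#|F|, #|SS|) :=
  \matrix_(i, j) (if Sof j \subset Aof i :\ ord_max then (-1)^+#|Sof j| else 0).
pose V : 'M['F_p]_(#|SS|, #|F|) :=
  \matrix_(j, l) (if Sof j \subset ~: Aof l then 1 else 0).
have NE : forall i l, (U *m V) i l =
   \sum_(k < q0n) (-1)^+k * ('C(#|Aof i :\ ord_max :\: Aof l|, k))%:R.
  move=> i l; rewrite mxE.
  rewrite (eq_bigr (fun k : 'I_q0n => ('C(#|Aof i :\ ord_max :\: Aof l|, k))%:R * (-1)^+k)); last by move=> k _; rewrite mulrC.
  rewrite -(@sum_by_card 'F_p _ _ _ (fun k => (-1)^+k)).
  transitivity (\sum_(j < #|SS|) (if Sof j \subset Aof i :\ ord_max :\: Aof l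
                   then (-1)^+#|Sof j| else 0 : 'F_p)).
    apply: eq_bigr => j _; rewrite !mxE (setDE (Aof i :\ ord_max)) subsetI.
    by case: (_ \subset _); case: (_ \subset _); rewrite ?mulr1 ?mulr0 ?mul0r.
  rewrite /Sof -(big_enum_val (fun S : {set 'I_m.+1} => if S \subset Aof i :\ ord_max :\: Aof l
                   then (-1)^+#|S| else 0 : 'F_p)) /=.
  rewrite big_mkcond [RHS]big_mkcond; apply: eq_bigr => S _.
  rewrite inE; have [sub|nsub] := boolP (S \subset Aof i :\ ord_max :\: Aof l); last first.
    by rewrite if_same.
  have -> : S \subset W0.
    apply: subset_trans sub _; apply/subsetP => y; rewrite !inE.
    by case/and3P.
  by rewrite /=; case: (_ < _)%N.
have Aof_in : forall i, Aof i \in F by move=> i; exact: enum_valP.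
have Aof_inj : injective Aof by move=> i j; exact: enum_val_inj.
have NI : forall i l, (ord_max \notin Aof i) || (ord_max \in Aof l) ->
    (U *m V) i l = (i == l)%:R.
  move=> i l c; rewrite NE.
  have [<-|neq] := eqVneq i l.
    have -> : Aof i :\ ord_max :\: Aof i = set0.
      by apply/setP => y; rewrite !inE; case: (y \in Aof i); rewrite ?andbF.
    rewrite cards0 /q0n -(prednK q0) big_ord_recl /= bin0 expr0 mul1r big1 ?addr0 //.
    by move=> k _; rewrite bin0n /= mulr0.
  have dif : Aof i != Aof l by apply/eqP => /Aof_inj /eqP; rewrite (negbTE neq).
  have eqs : Aof i :\ ord_max :\: Aof l = Aof i :\: Aof l.
    apply/setP => y; rewrite !inE; case: (eqVneq y ord_max) => [->|] //=.
    by case/orP: c => [/negbTE -> | ->]; rewrite ?andbF.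
  rewrite eqs /q0n key //.
  by have := H _ _ (Aof_in i) (Aof_in l) dif; rewrite /dvdn.
have rf : row_free (U *m V).
  apply/inj_row_free => v hv.
  have ent : forall l, (v *m (U *m V)) 0 l = 0 by move=> l; rewrite hv mxE.
  have v1 : forall l, ord_max \in Aof l -> v 0 l = 0.
    move=> l ml; rewrite -(ent l) mxE (bigD1 l) //= NI ?ml ?orbT // eqxx mulr1.
    rewrite big1 ?addr0 // => i ne.
    by rewrite NI ?ml ?orbT // (negbTE ne) mulr0.
  apply/rowP => l; rewrite [RHS]mxE.
  have key2 : forall i, v 0 i * (U *m V) i l = v 0 i * (i == l)%:R.
    move=> i; case: (boolP (ord_max \in Aof i)) => mi.
      by rewrite v1 // !mul0r.
    by rewrite NI ?mi.
  rewrite -(ent l) mxE (eq_bigr _ (fun i _ => key2 i)) (bigD1 l) //= eqxx mulr1.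
  by rewrite big1 ?addr0 // => i ne; rewrite (negbTE ne) mulr0.
move: rf; rewrite /row_free => /eqP <-.
apply: leq_trans (mxrankM_maxl _ _) _.
by apply: leq_trans (rank_leq_col _) _; rewrite cardSS.
Qed.
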